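(* Let $A\in\mathbb{R}_{\max}^{n\times n}$ with $\lambda(A)=0$, let $g=g(\mathrm{crit}(A))$, assume $T_1(A)=\mathrm{DM}(g,n)$ and that $\mathrm{crit}(A)$ contains, up to choice of first node, a unique cycle $Z_0$ of length $g$. Then in any interesting walk each node of $Z_0$ occurs exactly $g$ times and each node not in $Z_0$ occurs exactly $g+1$ times.
   Context: Max-plus semiring $\mathbb{R}_{\max}=\mathbb{R}\cup\{-\infty\}$ with $a\oplus b=\max(a,b)$, $a\otimes b=a+b$; $(AB)_{ij}=\max_k(a_{ik}+b_{kj})$; $A^t$ is the $t$-th max-plus power, $A^0=I$. $\mathcal{D}(A)$ is the digraph on $\{1,\dots,n\}$ with arc $(i,j)$ of weight $a_{ij}$ whenever $a_{ij}\ne-\infty$. A walk is a node sequence whose consecutive pairs are arcs, its length is its number of arcs and its weight the sum of its arc weights; cycles are closed walks with no proper closed subwalk. $\lambda(A)$ is the maximal cycle mean. $\mathrm{crit}(A)$ is the subgraph of all nodes and arcs of cycles attaining $\lambda(A)$; its nodes are critical. $g(\mathrm{crit}(A))$ is the maximum over strongly connected components of $\mathrm{crit}(A)$ of their minimal cycle length. The cyclicity of $\mathrm{crit}(A)$ is the lcm over components of the gcd of their cycle lengths. CSR terms: with $\gamma$ the cyclicity of $\mathrm{crit}(A)$ and $\lambda(A)=0$, $M=I\oplus N\oplus\dots\oplus N^{n-1}$ where $N=A^\gamma$: $c_{ij}=m_{ij}$ if $j$ critical, else $-\infty$; $r_{ij}=m_{ij}$ if $i$ critical, else $-\infty$; $s_{ij}=a_{ij}$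 if $(i,j)$ is an arc of $\mathrm{crit}(A)$, else $-\infty$; $CS^tR[A]$ is the product $CS^tR$. $B_N$ has $(B_N)_{ij}=-\infty$ if $i$ or $j$ is critical and $a_{ij}$ otherwise. $T_1(A)$ is the least $T\ge0$ with $A^t=CS^tR[A]\oplus B_N^t$ for all $t\ge T$. $\mathrm{DM}(g,n)=g(n-2)+n$. Twice optimal / interesting walks: a walk $W$ from $i$ to $j$ passing through at least one node of $Z_0$ is twice optimal if it has maximal weight among all walks from $i$ to $j$ passing through a node of $Z_0$ whose length is congruent to the length of $W$ modulo $g$, and has minimal length among all such walks of maximal weight. It is interesting if it is twice optimal and has length $\mathrm{DM}(g,n)+g-1$. *)

(* Defs.v *)
(* Weights live in an arbitrary real field R
   (the paper uses R = the real numbers); -oo is encoded as None. *)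
From HB Require Import structures.
From mathcomp Require Import all_boot all_order all_algebra.
From Stdlib Require Import ClassicalDescription.
Set Implicit Arguments. Unset Strict Implicit. Unset Printing Implicit Defensive.
Import Order.TTheory GRing.Theory Num.Theory.
Local Open Scope ring_scope.

Definition asbool (P : Prop) : bool :=
  if excluded_middle_informative P then true else false.

Section MaxPlus.
Variable R : realFieldType.
Variable n : nat.
Implicit Types (A B : 'M[option R]_n) (w : seq 'I_n).

Definition mpadd (a b : option R) : option R :=
  match a, b with
  | Some x, Some y => Some (Num.max x y)
  | None, _ => b
  | _, None => a
  end.
Definition mpmul (a b : option R) : option R :=
  match a, b with
  | Some x, Some y => Some (x + y)
  | _, _ => None
  end.

Definition mpmx_add A B : 'M[option R]_n := \matrix_(i, j) mpadd (A i j) (B i j).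
Definition mpmx_mul A B : 'M[option R]_n :=
  \matrix_(i, j) \big[mpadd/None]_(k < n) mpmul (A i k) (B k j).
Definition mpmx_one : 'M[option R]_n := \matrix_(i, j) if i == j then Some 0 else None.
Definition mpmx_pow A (t : nat) : 'M[option R]_n := iter t (mpmx_mul A) mpmx_one.

Definition arcA A : rel 'I_n := fun i j => A i j != None.

Definition is_walk (e : rel 'I_n) w : bool :=
  if w is x :: p then path e x p else false.
Definition wlen w : nat := (size w).-1.
Definition wweight A w : R := \sum_(a <- zip w (behead w)) odflt 0 (A a.1 a.2).
Definition walk_from_to A (i j : 'I_n) w : bool :=
  [&& is_walk (arcA A) w, ohead w == Some i & ohead (rev w) == Some j].

(* cycle of the digraph with arc relation e: closed walk of length >= 1
   with no proper closed subwalk (a closed subwalk being a segment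
   w_a ... w_b, a < b, with w_a = w_b) *)
Definition is_cycle (e : rel 'I_n) w : bool :=
  if w is x :: p then
    [&& path e x p, (0 < size p)%N, last x p == x &
        seq.all (fun a : nat => seq.all (fun b : nat =>
          ((a < b)%N && (nth x w a == nth x w b)) ==> ((a == 0)%N && (b == size p)))
          (seq.iota 0 (size w))) (seq.iota 0 (size w))]
  else false.

Definition cmean A w : R := wweight A w / (wlen w)%:R.

Definition is_lambda A (l : R) : Prop :=
  (exists c, is_cycle (arcA A) c /\ cmean A c = l) /\
  (forall c, is_cycle (arcA A) c -> cmean A c <= l).

Definition crit_cycle A c : Prop := is_cycle (arcA A) c /\ is_lambda A (cmean A c).
Definition critical A (i : 'I_n) : bool := asbool (exists c, crit_cycle A c /\ i \in c).
Definition crit_arc A : rel 'I_n :=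
  fun i j => asbool (exists c, crit_cycle A c /\ (i, j) \in zip c (behead c)).

Definition same_scc A (i j : 'I_n) : bool :=
  connect (crit_arc A) i j && connect (crit_arc A) j i.
Definition comp_cycle A (i : 'I_n) c : Prop :=
  is_cycle (crit_arc A) c /\ seq.all (same_scc A i) c.

Definition comp_girth A i (m : nat) : Prop :=
  (exists c, comp_cycle A i c /\ wlen c = m) /\
  (forall c, comp_cycle A i c -> (m <= wlen c)%N).
Definition is_g A (g : nat) : Prop :=
  (exists i, critical A i /\ comp_girth A i g) /\
  (forall i m, critical A i -> comp_girth A i m -> (m <= g)%N).

Definition comp_gcd A i (d : nat) : Prop :=
  (forall c, comp_cycle A i c -> (d %| wlen c)%N) /\
  (forall d', (forall c, comp_cycle A i c -> (d' %| wlen c)%N) -> (d' %| d)%N).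
Definition is_cyclicity A (gam : nat) : Prop :=
  (forall i d, critical A i -> comp_gcd A i d -> (d %| gam)%N) /\
  (forall g', (forall i d, critical A i -> comp_gcd A i d -> (d %| g')%N) ->
              (gam %| g')%N).

Definition mpmx_zero : 'M[option R]_n := \matrix_(i, j) None.

Definition csr_M A (gam : nat) : 'M[option R]_n :=
  \big[mpmx_add/mpmx_zero]_(k < n) mpmx_pow (mpmx_pow A gam) k.
Definition csr_C A gam : 'M[option R]_n :=
  \matrix_(i, j) if critical A j then csr_M A gam i j else None.
Definition csr_R A gam : 'M[option R]_n :=
  \matrix_(i, j) if critical A i then csr_M A gam i j else None.
Definition csr_S A : 'M[option R]_n :=
  \matrix_(i, j) if crit_arc A i j then A i j else None.
Definition csr_term A gam (t : nat) : 'M[option R]_n :=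
  mpmx_mul (mpmx_mul (csr_C A gam) (mpmx_pow (csr_S A) t)) (csr_R A gam).
Definition B_N A : 'M[option R]_n :=
  \matrix_(i, j) if critical A i || critical A j then None else A i j.

Definition T1_good A gam (T : nat) : Prop :=
  forall t, (T <= t)%N ->
    mpmx_pow A t = mpmx_add (csr_term A gam t) (mpmx_pow (B_N A) t).
Definition is_T1 A (T : nat) : Prop :=
  exists gam, is_cyclicity A gam /\
    T1_good A gam T /\ (forall T', T1_good A gam T' -> (T <= T')%N).

Definition unique_short_cycle A (g : nat) (Z0 : seq 'I_n) : Prop :=
  [/\ is_cycle (crit_arc A) Z0, wlen Z0 = g &
      forall c, is_cycle (crit_arc A) c -> wlen c = g ->
        exists k, behead c = rot k (behead Z0)].

End MaxPlus.

(* DM(g,n) = g(n-2)+n ; written so that truncated subtraction is exact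
   whenever n >= 1 and 1 <= g <= n (always the case here) *)
Definition DM (g n : nat) : nat := (g * n + n - g.*2)%N.

Section Walks.
Variable R : realFieldType.
Variable n : nat.
Implicit Types (A : 'M[option R]_n) (w : seq 'I_n).

Definition twice_optimal A (g : nat) (Z0 : seq 'I_n) (i j : 'I_n) W : Prop :=
  [/\ walk_from_to A i j W, has (mem Z0) W &
      forall V, walk_from_to A i j V -> has (mem Z0) V ->
        wlen V = wlen W %[mod g] ->
        wweight A V <= wweight A W /\
        (wweight A V = wweight A W -> (wlen W <= wlen V)%N)].

Definition interesting A g Z0 i j W : Prop :=
  twice_optimal A g Z0 i j W /\ wlen W = (DM g n + g - 1)%N.
End Walks.

(* Main.v *)
Require Import Defs.
From HB Require Import structures.
From mathcomp Require Import all_boot all_order all_algebra.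
From mathcomp Require Import zify.
From Stdlib Require Import Lia.
Set Implicit Arguments. Unset Strict Implicit. Unset Printing Implicit Defensive.
Import Order.TTheory GRing.Theory Num.Theory.
Local Open Scope ring_scope.



Definition cat_blocks (T : Type) (x : T) (cs : seq (seq T)) (v : seq T) :=
  foldr (fun c acc => c ++ x :: acc) v cs.

Lemma path_split (T : Type) (e : rel T) y s x t :
  path e y (s ++ x :: t) = path e y (rcons s x) && path e x t.
Proof. by rewrite cat_path rcons_path /= andbA. Qed.

Lemma walk_split (n : nat) (e : rel 'I_n) u x r :
  is_walk e (u ++ x :: r) = is_walk e (rcons u x) && path e x r.
Proof. by case: u => [|y u] //=; rewrite path_split. Qed.

Lemma in_split (T : eqType) (x : T) s : x \in s -> exists p1 p2, s = p1 ++ x :: p2.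
Proof.
elim: s => [|y s IH] //; rewrite in_cons => /orP[/eqP->|/IH[p1 [p2 ->]]].
  by exists [::], s.
by exists (y :: p1), p2.
Qed.

Lemma not_uniq_split (T : eqType) (s : seq T) : ~~ uniq s ->
  exists c1 y c2 c3, s = c1 ++ y :: c2 ++ y :: c3.
Proof.
elim: s => [|a s IH] //=; rewrite negb_and negbK => /orP[/in_split[p1 [p2 ->]]|/IH].
  by exists [::], a, p1, p2.
move=> [c1 [y [c2 [c3 ->]]]]; by exists (a :: c1), y, c2, c3.
Qed.

Lemma blocks_decomp (T : eqType) (x : T) (w : seq T) m :
  (m <= count_mem x w)%N -> exists cs v, size cs = m /\ w = cat_blocks x cs v.
Proof.
elim: w m => [|y w IH] m /=.
  by rewrite leqn0 => /eqP->; exists [::], [::].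
case: m => [|m] Hm; first by exists [::], (y :: w).
case: (eqVneq y x) Hm => [->|Hyx] /= Hm.
  have [cs [v [Hs ->]]] := IH m Hm.
  by exists ([::] :: cs), v; rewrite /= Hs.
rewrite add0n in Hm.
have [cs [v [Hs ->]]] := IH _ Hm.
case: cs Hs => [|c cs] Hs //=.
by exists ((y :: c) :: cs), v.
Qed.

Lemma cb_path (T : Type) (e : rel T) x cs v :
  path e x (cat_blocks x cs v) = all (fun c => path e x (rcons c x)) cs && path e x v.
Proof. by elim: cs => [|c cs IH] //=; rewrite path_split IH andbA. Qed.

Lemma cb_size (T : Type) (x : T) cs v :
  size (cat_blocks x cs v) = (\sum_(c <- cs) (size c).+1 + size v)%N.
Proof.
elim: cs => [|c cs IH]; first by rewrite big_nil.
by rewrite /= big_cons size_cat /= IH addnS addSn addnA.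
Qed.

Lemma cb_last (T : Type) (x : T) cs v : last x (cat_blocks x cs v) = last x v.
Proof. by elim: cs => [|c cs IH] //=; rewrite last_cat. Qed.

Lemma cb_mem (T : eqType) (x z : T) cs v : z \in cat_blocks x cs v ->
  [\/ z = x, z \in v | exists2 c, c \in cs & z \in c].
Proof.
elim: cs => [|c cs IH] /=; first by move=> H; apply: Or32.
rewrite mem_cat in_cons => /orP[H|/orP[/eqP->|/IH[->|H|[c' Hc' H]]]].
- by apply: Or33; exists c; rewrite ?mem_head.
- by apply: Or31.
- by apply: Or31.
- by apply: Or32.
- by apply: Or33; exists c' => //; rewrite in_cons Hc' orbT.
Qed.

Lemma cb_mem_blk (T : eqType) (x z : T) (cs : seq (seq T)) v (c : seq T) : c \in cs -> z \in c ->
  z \in cat_blocks x cs v.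
Proof.
elim: cs => [|c' cs IH] //=; rewrite in_cons mem_cat => /orP[/eqP<- ->//|Hc Hz].
by rewrite in_cons IH ?orbT.
Qed.

Lemma cb_mem_v (T : eqType) (x z : T) cs v : z \in v -> z \in cat_blocks x cs v.
Proof. by elim: cs => [|c cs IH] //= Hz; rewrite mem_cat in_cons IH ?orbT. Qed.

Lemma ohead_rev (T : Type) (y : T) s : ohead (rev (y :: s)) = Some (last y s).
Proof. by rewrite lastI rev_rcons. Qed.

Lemma ohead_rev_split (T : Type) u (x : T) r : ohead (rev (u ++ x :: r)) = Some (last x r).
Proof. by case: u => [|y u]; rewrite ?cat0s ohead_rev // last_cat. Qed.

Lemma wlen_split (n : nat) u (x : 'I_n) r : wlen (u ++ x :: r) = (size u + size r)%N.
Proof. by rewrite /wlen size_cat /= addnS. Qed.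

Lemma run_lemma (T : Type) (f : T -> nat) g (cs : seq T) : (0 < g)%N -> (g <= size cs)%N ->
  exists a b c, [/\ cs = a ++ b ++ c, (0 < size b)%N & (g %| \sum_(y <- b) f y)%N].
Proof.
move=> g0 gs.
pose F k := (\sum_(y <- take k cs) f y)%N.
pose s := [seq (F k %% g)%N | k <- iota 0 g.+1].
have : ~~ uniq s.
  apply/negP => Hu.
  have Hsub : {subset s <= iota 0 g}.
    by move=> y /mapP[k _ ->]; rewrite mem_iota add0n ltn_pmod.
  by have := uniq_leq_size Hu Hsub; rewrite size_map !size_iota ltnn.
case/(uniqPn 0) => i [j [Hij]]; rewrite size_map size_iota => Hj.
rewrite !(nth_map 0) ?size_iota ?(ltn_trans Hij) // !nth_iota ?(ltn_trans Hij) // !add0n.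
move=> Heq.
have Ej : take j cs = take i cs ++ take (j - i) (drop i cs).
  by rewrite -takeD subnKC // ltnW.
exists (take i cs), (take (j - i) (drop i cs)), (drop j cs); split.
- rewrite -{1}(cat_take_drop i cs); congr (_ ++ _).
  by rewrite -{1}(cat_take_drop (j - i) (drop i cs)) drop_drop subnK // ltnW.
- have Hjc : (j <= size cs)%N by rewrite -ltnS; apply: leq_trans Hj _.
  by rewrite size_takel ?subn_gt0 // size_drop leq_sub2r.
- move: Heq; rewrite /F Ej big_cat /=.
  rewrite -{1}[(\sum_(y <- take i cs) f y)%N]addn0 => /eqP; rewrite eqn_modDl mod0n eq_sym.
  by rewrite /dvdn.
Qed.



Section W.
Variable R : realFieldType.
Variable n : nat.
Variable A : 'M[option R]_n.

Lemma ww1 (y : 'I_n) : wweight A [:: y] = 0.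
Proof. by rewrite /wweight /= big_nil. Qed.

Lemma ww2 (y z : 'I_n) r : wweight A [:: y, z & r] = odflt 0 (A y z) + wweight A (z :: r).
Proof. by rewrite /wweight /= big_cons. Qed.

Lemma ww_split u (x : 'I_n) t :
  wweight A (u ++ x :: t) = wweight A (rcons u x) + wweight A (x :: t).
Proof.
case: u => [|y u]; first by rewrite /= ww1 add0r.
elim: u y => [|z u IH] y /=; first by rewrite !ww2 ww1 addr0.
by rewrite !ww2 IH addrA.
Qed.

Lemma cb_weight (x : 'I_n) cs v :
  wweight A (x :: cat_blocks x cs v) =
  \sum_(c <- cs) wweight A (x :: rcons c x) + wweight A (x :: v).
Proof.
elim: cs => [|c cs IH]; first by rewrite big_nil add0r.
by rewrite big_cons /= -cat_cons ww_split IH addrA.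
Qed.

Lemma uniq_cycle (x : 'I_n) c : path (arcA A) x (rcons c x) -> uniq (x :: c) ->
  is_cycle (arcA A) (x :: rcons c x).
Proof.
move=> Hp Hu; rewrite /is_cycle Hp size_rcons last_rcons eqxx ltn0Sn !andTb.
have Nth k : nth x (x :: rcons c x) k = nth x (x :: c) k.
  by rewrite -rcons_cons nth_rcons; case: ltnP => // H; rewrite nth_default //; case: eqP.
apply/allP => a; rewrite mem_iota add0n => Ha.
apply/allP => b; rewrite mem_iota add0n => Hb.
apply/implyP => /andP[Hab]; rewrite !Nth => /eqP Heq.
have Hc1 : size (x :: c) = (size c).+1 by [].
case: (ltnP b (size c).+1) => Hb'.
  move: Heq => /eqP; rewrite nth_uniq //; last by apply: ltn_trans Hb'.
  by move/eqP=> E; rewrite E ltnn in Hab.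
have Ebs : b = (size c).+1.
  by apply/eqP; rewrite eqn_leq Hb' andbT -ltnS; move: Hb; rewrite /= size_rcons.
rewrite Ebs eqxx andbT.
have Ha' : (a < (size c).+1)%N by rewrite -Ebs.
move: Heq; rewrite [in RHS]nth_default ?Ebs // => Heq.
have : nth x (x :: c) a == nth x (x :: c) 0 by rewrite Heq.
by rewrite nth_uniq.
Qed.

Lemma closed_le0 : is_lambda A 0 ->
  forall (x : 'I_n) c, path (arcA A) x (rcons c x) -> wweight A (x :: rcons c x) <= 0.
Proof.
move=> [_ Hl] x c.
have Add (a b : R) : a <= 0 -> b <= 0 -> a + b <= 0.
  by move=> Ha Hb; rewrite -[0]addr0 lerD.
move: {2}(size c).+1 (ltnSn (size c)) => k; elim: k x c => [|k IHk] x c //= Hk Hp.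
case Hx: (x \in c).
  have [c1 [c2 Ec]] := in_split Hx; subst c.
  move: Hp Hk; rewrite rcons_cat rcons_cons path_split => /andP[P1 P2].
  rewrite size_cat /= ltnS => Hk.
  rewrite -cat_cons ww_split rcons_cons; apply: Add; apply: IHk => //.
    lia.
  lia.
case Hu: (uniq c).
  have Hc : is_cycle (arcA A) (x :: rcons c x) by apply: uniq_cycle; rewrite //= Hx Hu.
  have := Hl _ Hc; rewrite /cmean /wlen /= size_rcons.
  by rewrite pmulr_lle0 // invr_gt0 ltr0Sn.
have [c1 [y [c2 [c3 Ec]]]] := not_uniq_split (negbT Hu); subst c.
move: Hp Hk; rewrite rcons_cat rcons_cons rcons_cat rcons_cons.
rewrite path_split => /andP[P1]; rewrite path_split => /andP[P2 P3].
rewrite !size_cat /= size_cat /= ltnS => Hk.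
rewrite -cat_cons ww_split -cat_cons ww_split !rcons_cons addrCA.
apply: Add; first by apply: IHk => //; lia.
have -> : wweight A (x :: rcons c1 y) + wweight A (y :: rcons c3 x) =
          wweight A (x :: rcons (c1 ++ y :: c3) x).
  by rewrite rcons_cat rcons_cons -cat_cons ww_split rcons_cons.
apply: IHk; last by rewrite rcons_cat rcons_cons path_split P1.
rewrite size_cat /=; lia.
Qed.

End W.



Lemma arith1 (a s1 s2 c : nat) : (a + (s1 + s2 + c) = a + (s1 + c) + s2)%N.
Proof. lia. Qed.

Lemma sum_pos (T : Type) (b : seq (seq T)) : (0 < size b)%N -> (0 < \sum_(c <- b) (size c).+1)%N.
Proof. by case: b => // c b _; rewrite big_cons. Qed.

Lemma arith2 (a s : nat) : (0 < s)%N -> (a + s <= a)%N -> False.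
Proof. lia. Qed.

Section C.
Variable R : realFieldType.
Variable n : nat.
Variable A : 'M[option R]_n.

Lemma core g (Z0 : seq 'I_n) (i j : 'I_n) (W u : seq 'I_n) (x : 'I_n)
  (cs : seq (seq 'I_n)) (v : seq 'I_n) (cs' b : seq (seq 'I_n)) :
  is_lambda A 0 ->
  twice_optimal A g Z0 i j W ->
  W = u ++ x :: cat_blocks x cs v -> perm_eq cs (cs' ++ b) -> (0 < size b)%N ->
  (g %| \sum_(c <- b) (size c).+1)%N ->
  has (mem Z0) (u ++ x :: cat_blocks x cs' v) -> False.
Proof.
move=> Hlam [Hw HZ Hopt] EW Hperm Hb Hdiv HZV.
case/and3P: Hw => Hwalk Hhd Htl.
move: (Hwalk); rewrite EW walk_split cb_path (perm_all _ Hperm) all_cat.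
case/and3P => Hu /andP[Hcs' Hbb] Hv.
have HV : walk_from_to A i j (u ++ x :: cat_blocks x cs' v).
  apply/and3P; split.
  - by rewrite walk_split cb_path Hu Hcs' Hv.
  - by move: Hhd; rewrite EW; case: u {EW Hu HZV}.
  - by move: Htl; rewrite EW !ohead_rev_split !cb_last.
have Ssum : (\sum_(c <- cs) (size c).+1 = \sum_(c <- cs') (size c).+1 + \sum_(c <- b) (size c).+1)%N.
  by rewrite (perm_big _ Hperm) big_cat.
have Wsum : \sum_(c <- cs) wweight A (x :: rcons c x) =
   \sum_(c <- cs') wweight A (x :: rcons c x) + \sum_(c <- b) wweight A (x :: rcons c x).
  by rewrite (perm_big _ Hperm) big_cat.
have Hble : \sum_(c <- b) wweight A (x :: rcons c x) <= 0.
  rewrite big_seq; apply: le_trans (ler_sum _ (G := fun _ => 0) _) _.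
    by move=> c Hc; apply: closed_le0 => //; move/allP: Hbb; apply.
  by rewrite big1.
have LW : wlen W = (wlen (u ++ x :: cat_blocks x cs' v) + \sum_(c <- b) (size c).+1)%N.
  rewrite EW !wlen_split !cb_size Ssum.
  exact: arith1.
have Hmod : wlen (u ++ x :: cat_blocks x cs' v) = wlen W %[mod g].
  by case/dvdnP: Hdiv => q Hq; rewrite LW Hq addnC modnMDl.
have [Hle Hmin] := Hopt _ HV HZV Hmod.
have Hge : wweight A W <= wweight A (u ++ x :: cat_blocks x cs' v).
  rewrite EW !ww_split !cb_weight Wsum lerD2l lerD2r.
  by rewrite -[X in _ <= X]addr0 lerD2l.
have := Hmin (le_anti (andb_true_intro (conj Hle Hge))).
rewrite LW => H.
exact: (arith2 (sum_pos Hb) H).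
Qed.

End C.



Lemma perm1 (T : eqType) (a b c : seq T) : perm_eq (a ++ b ++ c) ((a ++ c) ++ b).
Proof. by rewrite -catA perm_cat2l perm_catC. Qed.

Lemma perm2 (T : eqType) (pre post a b d : seq T) (c : T) :
  post ++ pre = a ++ b ++ d -> perm_eq (pre ++ c :: post) ((c :: a ++ d) ++ b).
Proof.
move=> E; rewrite perm_catC /= perm_cons E; exact: perm1.
Qed.

Lemma sum_count_mem (T : finType) (s : seq T) : (\sum_(y : T) count_mem y s)%N = size s.
Proof.
elim: s => [|a s IH] /=; first by rewrite big1.
rewrite big_split /= IH (bigD1 a) //= eqxx big1 // => y Hy.
by rewrite eq_sym (negbTE Hy).
Qed.

Lemma Z0_facts (n : nat) (e : rel 'I_n) Z0 : is_cycle e Z0 ->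
  exists z0 p, [/\ Z0 = z0 :: p, uniq p, forall y, (y \in Z0) = (y \in p),
     wlen Z0 = size p & (0 < size p)%N].
Proof.
case: Z0 => [|z0 p] //; rewrite /is_cycle => /and4P[_ Hs /eqP Hl Hall].
exists z0, p; split => //.
- apply/negP => /negP /(uniqPn z0) [a [b [Hab Hb Heq]]].
  move/allP: Hall => Hall.
  have := Hall a.+1; rewrite mem_iota add0n ltnS (ltn_trans Hab Hb) => /(_ isT) /allP H.
  have := H b.+1; rewrite mem_iota add0n leq0n /= ltnS Hb => /(_ isT).
  by rewrite ltnS Hab /= Heq eqxx.
- move=> y; rewrite in_cons; case: eqP => // ->.
  move: Hs Hl; case/lastP: p {Hall} => [|p' y0] // _; rewrite last_rcons => ->.
  by rewrite mem_rcons mem_head.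
Qed.

Lemma arith3 (g n m : nat) : (1 <= g)%N -> (g <= n)%N -> (g <= m)%N ->
  ((m + n - g.*2 + g - 1).+1 = m + n - g)%N.
Proof. lia. Qed.

Lemma arith4 (g n : nat) : (g <= n)%N -> (n * g.+1 - g + g = n * g.+1)%N.
Proof. move=> H; rewrite subnK //; by apply: leq_trans H _; rewrite leq_pmulr. Qed.



Lemma arith5 (X g m : nat) : (X + g = m)%N -> X = (m - g)%N.
Proof. by move=> <-; rewrite addnK. Qed.

Lemma arith6 (a b g : nat) : (a + b.+1 = g.+1)%N -> (g <= b + a)%N.
Proof. by rewrite addnS => -[<-]; rewrite addnC. Qed.

Theorem lemmal (R : realFieldType) (n : nat) (A : 'M[option R]_n)
    (g : nat) (Z0 : seq 'I_n) :
  is_lambda A 0 ->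
  is_g A g ->
  is_T1 A (DM g n) ->
  unique_short_cycle A g Z0 ->
  forall (i j : 'I_n) (W : seq 'I_n), interesting A g Z0 i j W ->
  forall x : 'I_n, count_mem x W = (if x \in Z0 then g else g.+1)%N.
Proof.
move=> Hlam _ _ [HZc HZl _] i j W [Hto HlW].
have [z0 [p [EZ Hup HmZ HwZ Hp0]]] := Z0_facts HZc.
have Hg : g = size p by rewrite -HZl HwZ.
have Hg0 : (0 < g)%N by rewrite Hg.
have Hgn : (g <= n)%N.
  by rewrite Hg; move/card_uniqP: Hup => <-; apply: leq_trans (max_card _) _; rewrite card_ord.
have Hto' := Hto; case: Hto' => Hw HZ _.
have Hbound : forall y, (count_mem y W <= (if y \in Z0 then g else g.+1))%N.
  move=> y; rewrite leqNgt; apply/negP => Hc.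
  case Hy: (y \in Z0); rewrite Hy in Hc.
    have [[|u cs] [v [Hs EW]]] := blocks_decomp Hc; first by [].
    case: Hs => Hs.
    have [a [b [c [Ecs Hb Hdv]]]] := run_lemma (fun c : seq 'I_n => (size c).+1) Hg0 (eq_leq (esym Hs)).
    apply: (core (cs' := a ++ c) (b := b) Hlam Hto EW _ Hb Hdv).
      by rewrite Ecs; apply: perm1.
    by apply/hasP; exists y; rewrite // mem_cat mem_head orbT.
  have [[|u cs] [v [Hs EW]]] := blocks_decomp Hc; first by [].
  case: Hs => Hs.
  have EW' : W = u ++ y :: cat_blocks y cs v by [].
  case/hasP: HZ => z Hz HzZ.
  have HzZ' : z \in Z0 := HzZ.
  have Hzy : z != y by apply/eqP => Ezy; rewrite -Ezy HzZ' in Hy.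
  move: Hz; rewrite EW' mem_cat in_cons (negbTE Hzy) /= => /orP[Hzu|/cb_mem[Ezy|Hzv|[c Hcs Hzc]]].
  - have [a [b [d [Ecs Hb Hdv]]]] := run_lemma (fun c : seq 'I_n => (size c).+1) Hg0 (ltnW (eq_leq (esym Hs))).
    apply: (core (cs' := a ++ d) (b := b) Hlam Hto EW' _ Hb Hdv).
      by rewrite Ecs; apply: perm1.
    by apply/hasP; exists z; rewrite // mem_cat Hzu.
  - by rewrite Ezy eqxx in Hzy.
  - have [a [b [d [Ecs Hb Hdv]]]] := run_lemma (fun c : seq 'I_n => (size c).+1) Hg0 (ltnW (eq_leq (esym Hs))).
    apply: (core (cs' := a ++ d) (b := b) Hlam Hto EW' _ Hb Hdv).
      by rewrite Ecs; apply: perm1.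
    by apply/hasP; exists z; rewrite // mem_cat in_cons cb_mem_v ?orbT.
  have [pre [post Ecs]] := in_split Hcs.
  have Hpp : (g <= size (post ++ pre))%N.
    by move: Hs; rewrite Ecs !size_cat /=; apply: arith6.
  have [a [b [d [Epp Hb Hdv]]]] := run_lemma (fun c : seq 'I_n => (size c).+1) Hg0 Hpp.
  apply: (core (cs' := c :: a ++ d) (b := b) Hlam Hto EW' _ Hb Hdv).
    by rewrite Ecs; apply: perm2.
  apply/hasP; exists z => //; rewrite mem_cat in_cons (cb_mem_blk _ _ (mem_head _ _) Hzc).
  by rewrite !orbT.
have HsW : size W = (g * n + n - g)%N.
  have -> : size W = (wlen W).+1.
    by case/and3P: Hw; case: (W).
  rewrite HlW /DM; apply: arith3 => //.
  by rewrite leq_pmulr // (leq_trans Hg0 Hgn).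
have Hsum2 : (\sum_(y : 'I_n) (if y \in Z0 then g else g.+1))%N = (g * n + n - g)%N.
  have Hcp : (\sum_(y : 'I_n) (y \in p : nat))%N = g.
    rewrite Hg -(card_uniqP Hup) -sum1_card [RHS]big_mkcond /=.
    by apply: eq_bigr => y _; case: (y \in p).
  have E : (\sum_(y : 'I_n) (if y \in Z0 then g else g.+1) + \sum_(y : 'I_n) (y \in p : nat) = n * g.+1)%N.
    rewrite -big_split /=.
    rewrite (eq_bigr (fun _ => g.+1)); last first.
      by move=> y _; rewrite HmZ; case: (y \in p); rewrite ?addn0 ?addn1.
    by rewrite big_const_ord iter_addn_0 mulnC.
  rewrite Hcp in E; apply: arith5.
  by rewrite E mulnS mulnC addnC.
move=> x; apply/eqP; rewrite eqn_leq Hbound /= leqNgt; apply/negP => Hlt.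
have : (\sum_(y : 'I_n) count_mem y W < \sum_(y : 'I_n) (if y \in Z0 then g else g.+1))%N.
  rewrite (bigD1 x) //= [X in (_ < X)%N](bigD1 x) //= -addSn.
  by apply: leq_add Hlt _; apply: leq_sum => y _; apply: Hbound.
by rewrite sum_count_mem HsW Hsum2 ltnn.
Qed.
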